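(* Let $\mu\in\mathbb F_q\setminus\{0\}$. Any family of pairwise disjoint generators of $\mathcal Q_\mu$ that are totally isotropic with respect to $\perp_0$ has at most $q+1$ members.
   Context: Let $q$ be an even prime power and $n\ge 2$ an integer. Let $\mathrm{PG}(2n+1,q)$ have homogeneous coordinates $(X_1,\dots,X_{2n+2})$. Fix $\delta\in\mathbb F_q$ such that $X^2+X+\delta$ is irreducible over $\mathbb F_q$. For $\mu\in\mathbb F_q$ let $\mathcal Q_\mu$ be the elliptic quadric $X_1^2+X_1X_{2n+2}+\delta X_{2n+2}^2+\sum_{i=2}^{n+1}X_iX_{2n+3-i}+\mu(X_{2n}^2+X_{2n}X_{2n+1}+\delta X_{2n+1}^2)=0$, whose generators are $(n-1)$-spaces. Let $\perp_0$ be the symplectic polarity defined by the alternating form $B_0(X,Y)=\sum_{i=1}^{2n+2}X_iY_{2n+3-i}$. *)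

(* Defs.v *)
From HB Require Import structures.
From mathcomp Require Import all_boot all_order all_algebra all_field.
Set Implicit Arguments. Unset Strict Implicit. Unset Printing Implicit Defensive.
Import GRing.Theory.
Local Open Scope ring_scope.

(* PG(2n+1,q) is modelled by the vector space 'rV[F]_(2n+2) = 'rV[F]_(n.*2.+2).
   Coordinate X_i (1 <= i <= 2n+2, as in the paper) is entry i-1. *)
Definition coord (F : fieldType) (n : nat) (x : 'rV[F]_(n.*2.+2)) (i : nat) : F :=
  x ord0 (inord i.-1).

Definition Qform (F : fieldType) (n : nat) (delta mu : F) (x : 'rV[F]_(n.*2.+2)) : F :=
  let X := coord x in
  X 1%N ^+ 2 + X 1%N * X (n.*2.+2) + delta * X (n.*2.+2) ^+ 2
  + \sum_(2 <= i < n.+2) X i * X (n.*2.+3 - i)%N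
  + mu * (X (n.*2) ^+ 2 + X (n.*2) * X (n.*2.+1) + delta * X (n.*2.+1) ^+ 2).

Definition B0 (F : fieldType) (n : nat) (x y : 'rV[F]_(n.*2.+2)) : F :=
  \sum_(1 <= i < n.*2.+3) coord x i * coord y (n.*2.+3 - i)%N.

(* A generator of Q_mu: an (n-1)-dimensional projective subspace, i.e. an
   n-dimensional vector subspace, contained in the quadric. *)
Definition is_generator (F : fieldType) (n : nat) (delta mu : F)
    (U : {vspace 'rV[F]_(n.*2.+2)}) : Prop :=
  \dim U = n /\ forall x, x \in U -> Qform delta mu x = 0.

Definition totally_isotropic0 (F : fieldType) (n : nat)
    (U : {vspace 'rV[F]_(n.*2.+2)}) : Prop :=
  forall x y, x \in U -> y \in U -> B0 x y = 0.

(* Main.v *)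
Require Import Defs.
From HB Require Import structures.
From mathcomp Require Import all_boot all_order all_algebra all_field.
From mathcomp Require Import zify ring.
From Stdlib Require Import Classical.
Import Defs.
Set Implicit Arguments. Unset Strict Implicit. Unset Printing Implicit Defensive.
Import GRing.Theory.
Local Open Scope ring_scope.

Lemma dot_dim (F : fieldType) m (P Q : {vspace 'rV[F]_m}) :
  (forall p q, p \in P -> q \in Q -> (p *m q^T) 0 0 = 0) -> (\dim P + \dim Q <= m)%N.
Proof.
move=> PQ.
set b := \dim Q; set X := vbasis Q.
pose A : 'M[F]_(b, m) := \matrix_(i < b) (X`_i : 'rV_m).
have Afree : row_free A.
  apply: inj_row_free => v vA.
  have /freeP fr := basis_free (vbasisP Q).
  apply/rowP => i; rewrite mxE; apply: (fr (fun i => v 0 i)) .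
  by rewrite -[RHS]vA mulmx_sum_row; apply: eq_bigr => j _; rewrite rowK.
have Afull : row_full A^T by rewrite /row_full mxrank_tr; exact: Afree.
pose f : 'Hom('rV[F]_m, 'rV[F]_b) := linfun (mulmxr A^T).
have Pk : (P <= lker f)%VS.
  apply/subvP => p pP; rewrite memv_ker lfunE /=; apply/eqP/rowP => j.
  rewrite !mxE; transitivity ((p *m (X`_j)^T) 0 0); last first.
    by apply: PQ => //; apply: vbasis_mem; rewrite mem_nth // size_tuple.
  by rewrite !mxE; apply: eq_bigr => k _; rewrite !mxE.
have imf : (f @: fullv = fullv)%VS.
  apply/eqP; rewrite eqEsubv subvf /=; apply/subvP => w _.
  case/row_fullP: Afull => B BA.
  have -> : w = f (w *m B) by rewrite lfunE /= -mulmxA BA mulmx1.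
  exact: memv_img (memvf _).
have := limg_ker_dim f fullv.
rewrite capfv imf !dimvf => H0; have H : (\dim (lker f) + b = m)%N by rewrite -[RHS]mul1n -[X in (_ + X)%N]mul1n; exact: H0.
by apply: leq_trans (_ : (\dim (lker f) + b <= m)%N); [rewrite leq_add2r dimvS | rewrite H].
Qed.

Lemma aniso (F : fieldType) (delta a b : F) :
  irreducible_poly ('X^2 + 'X + delta%:P) ->
  a ^+ 2 + a * b + delta * b ^+ 2 = 0 -> a = 0 /\ b = 0.
Proof.
move=> irr E.
have [b0|bn0] := eqVneq b 0.
  split=> //; move: E; rewrite b0 mulr0 expr0n /= mulr0 !addr0.
  by move/eqP; rewrite expf_eq0 /= => /eqP.
exfalso.
set t := a / b.
have rt : root ('X^2 + 'X + delta%:P) t.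
  rewrite /root !hornerE; apply/eqP.
  have -> : t ^+ 2 + t + delta = (a ^+ 2 + a * b + delta * b ^+ 2) / b ^+ 2.
    by rewrite /t; field.
  by rewrite E mul0r.
have dv : ('X - t%:P) %| ('X^2 + 'X + delta%:P) by rewrite dvdp_XsubCl.
have sz : size ('X^2 + 'X + delta%:P : {poly F}) = 3%N.
  by rewrite -addrA size_polyDl ?size_polyXn // size_XaddC.
case: (irredp_XsubCP irr dv) => /eqp_size; rewrite size_XsubC ?sz ?size_poly1 //.
Qed.

Section Basics.
Variable (F : fieldType) (n : nat).
Local Notation N := (n.*2.+2).
Local Notation V := 'rV[F]_N.

Lemma coordD (x y : V) i : coord (x + y) i = coord x i + coord y i.
Proof. by rewrite /coord mxE. Qed.
Lemma coordZ a (x : V) i : coord (a *: x) i = a * coord x i.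
Proof. by rewrite /coord mxE. Qed.
Lemma coord0 i : coord (0 : V) i = 0.
Proof. by rewrite /coord mxE. Qed.

Lemma coord_eq (r s : V) :
  (forall l, (0 < l <= N)%N -> coord r l = coord s l) -> r = s.
Proof.
move=> H; apply/rowP => j; have := H j.+1; rewrite /coord /= inord_val.
have -> : (0 : 'I_1) = ord0 by apply/val_inj.
by apply; rewrite ltn_ord.
Qed.

Definition selmx k (f : 'I_k -> nat) : 'M[F]_(N, k) :=
  \matrix_(a, j) ((a.+1 == f j)%:R).

Lemma sel_coord k (f : 'I_k -> nat) (x : V) j :
  (0 < f j <= N)%N -> (x *m selmx f) 0 j = coord x (f j).
Proof.
move=> /andP[f0 fN]; rewrite mxE (bigD1 (inord (f j).-1)) //= big1 ?addr0.
  rewrite !mxE inordK; last by move: f0 fN; case: (f j).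
  rewrite prednK // eqxx mulr1 /coord; congr (x _ _); exact/val_inj.
move=> a ana; rewrite !mxE; case: eqP => [ea|]; last by rewrite mulr0.
by case/eqP: ana; apply/val_inj; rewrite /= -ea /= inordK.
Qed.

End Basics.

Section S2.
Variable (F : fieldType) (n : nat).
Hypothesis n2 : (2 <= n)%N.
Local Notation N := (n.*2.+2).
Local Notation V := 'rV[F]_N.

Definition Ssum (x y : V) := \sum_(2 <= i < n.+2) coord x i * coord y (n.*2.+3 - i).

Lemma B0_split (x y : V) :
  B0 x y = coord x 1 * coord y N + coord x N * coord y 1 + Ssum x y + Ssum y x.
Proof.
have E : \sum_(n.+2 <= i < N) coord x i * coord y (n.*2.+3 - i)
    = \sum_(2 <= i < n.+2) coord y i * coord x (n.*2.+3 - i).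
  rewrite (big_addn 0 N n.+2) (big_addn 0 n.+2 2).
  have -> : (N - n.+2 = n)%N by lia.
  have -> : (n.+2 - 2 = n)%N by lia.
  rewrite big_nat_rev /=; apply: eq_big_nat => i /andP[_ hi].
  by rewrite mulrC; congr (_ * _); congr (coord _ _); lia.
rewrite /B0 /Ssum (@big_cat_nat _ _ _ n.+2) //; last by lia.
rewrite big_ltn // (big_nat_recr n.*2.+2 n.+2) /=; last by lia.
rewrite E.
have -> : (n.*2.+3 - 1 = N)%N by lia.
have -> : (n.*2.+3 - N = 1)%N by lia.
ring.
Qed.

Lemma Ssum_addl (x y z : V) : Ssum (x + y) z = Ssum x z + Ssum y z.
Proof. by rewrite /Ssum -big_split; apply: eq_bigr => i _; rewrite coordD mulrDl. Qed.
Lemma Ssum_addr (x y z : V) : Ssum z (x + y) = Ssum z x + Ssum z y.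
Proof. by rewrite /Ssum -big_split; apply: eq_bigr => i _; rewrite coordD mulrDr. Qed.

Lemma Qform_S (delta mu : F) (z : V) : Qform delta mu z =
  coord z 1 ^+ 2 + coord z 1 * coord z N + delta * coord z N ^+ 2
  + Ssum z z
  + mu * (coord z (n.*2) ^+ 2 + coord z (n.*2) * coord z (n.*2.+1)
          + delta * coord z (n.*2.+1) ^+ 2).
Proof. by []. Qed.

Lemma Q_add (c2 : (2 : F) = 0) (delta mu : F) (x y : V) :
  Qform delta mu (x + y) = Qform delta mu x + Qform delta mu y + B0 x y
   + mu * (coord x (n.*2) * coord y (n.*2.+1) + coord x (n.*2.+1) * coord y (n.*2)).
Proof.
rewrite !Qform_S B0_split Ssum_addl !Ssum_addr !coordD.
apply/eqP; rewrite -subr_eq0; apply/eqP.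
set a1 := coord x 1; set b1 := coord y 1; set aN := coord x N; set bN := coord y N.
set a2 := coord x (n.*2); set b2 := coord y (n.*2).
set a3 := coord x (n.*2.+1); set b3 := coord y (n.*2.+1).
transitivity (2 * (a1 * b1 + delta * aN * bN + mu * (a2 * b2 + delta * a3 * b3))).
  ring.
by rewrite c2 mul0r.
Qed.
End S2.

Section Geo.
Variable (F : fieldType) (n : nat) (delta mu : F).
Hypothesis n2 : (2 <= n)%N.
Hypothesis c2 : (2 : F) = 0.
Hypothesis irr : irreducible_poly ('X^2 + 'X + delta%:P).
Hypothesis mu0 : mu != 0.
Local Notation N := (n.*2.+2).
Local Notation V := 'rV[F]_N.

Definition hf (l : nat) : 'Hom(V, 'rV[F]_1) := linfun (mulmxr (selmx F n (fun _ : 'I_1 => l))).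

Lemma hf_ker l (y : V) : (0 < l <= N)%N -> (y \in lker (hf l)) = (coord y l == 0).
Proof.
move=> hl; rewrite memv_ker lfunE /=; apply/eqP/eqP => [E|E].
  by rewrite -(sel_coord (f := fun _ : 'I_1 => l) y (j := 0)) // E mxE.
by apply/rowP => j; rewrite ord1 sel_coord // E mxE.
Qed.

Lemma dim_cap_hf l (U : {vspace V}) : ((\dim U).-1 <= \dim (U :&: lker (hf l)))%N.
Proof.
have := limg_ker_dim (hf l) U; have := dimvS (subvf (hf l @: U)).
rewrite dimvf => H1 H2.
have H3 : (\dim (hf l @: U) <= 1)%N by exact: H1.
rewrite -H2; move: H3; case: (\dim (hf l @: U)) => [|[|]] //= _.
  by rewrite addn0 leq_pred.
by rewrite addn1.
Qed.

Variable U : {vspace V}.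
Hypothesis Ugen : is_generator delta mu U.
Hypothesis Uiso : totally_isotropic0 U.

Lemma stepA : exists K : {vspace V}, (K <= U)%VS /\ (n.-1 <= \dim K)%N /\
  forall y, y \in K -> coord y (n.*2) = 0 /\ coord y (n.*2.+1) = 0.
Proof.
case: Ugen => dU QU.
have h2n : (0 < n.*2 <= N)%N by lia.
have h2n1 : (0 < n.*2.+1 <= N)%N by lia.
case: (classic (exists u, u \in U /\ coord u (n.*2) != 0)) => [[u [uU un0]]|nex].
  exists (U :&: lker (hf (n.*2)))%VS; split; first exact: vector.capvSl.
  split; first by have := dim_cap_hf (n.*2) U; rewrite dU.
  move=> y /memv_capP[yU]; rewrite hf_ker // => /eqP y0; split=> //.
  have := Q_add n2 c2 delta mu u y.
  rewrite !QU ?memvD // Uiso // y0 mulr0 addr0 !add0r => /esym/eqP.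
  by rewrite !mulf_eq0 (negPf mu0) /= addr0 mulf_eq0 (negPf un0) /= => /eqP.
exists (U :&: lker (hf (n.*2.+1)))%VS; split; first exact: vector.capvSl.
split; first by have := dim_cap_hf (n.*2.+1) U; rewrite dU.
move=> y /memv_capP[yU]; rewrite hf_ker // => /eqP y0; split=> //.
apply: NNPP => yn0; apply: nex; exists y; split=> //; exact/eqP.
Qed.

Definition inR (r : V) := forall l, (0 < l <= N)%N -> l != 2%N -> l != 3%N -> coord r l = 0.

Definition lam : 'Hom(V, 'rV[F]_(n - 2)) :=
  linfun (mulmxr (selmx F n (fun j : 'I_(n - 2) => (j + 4)%N))).
Definition rho : 'Hom(V, 'rV[F]_(n - 2)) :=
  linfun (mulmxr (selmx F n (fun j : 'I_(n - 2) => (n.*2 - 1 - j)%N))).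

Lemma lamE x (j : 'I_(n - 2)) : lam x 0 j = coord x (j + 4).
Proof. by rewrite lfunE /= sel_coord //; have := ltn_ord j; lia. Qed.
Lemma rhoE x (j : 'I_(n - 2)) : rho x 0 j = coord x (n.*2 - 1 - j).
Proof. by rewrite lfunE /= sel_coord //; have := ltn_ord j; lia. Qed.

Lemma stepB (K : {vspace V}) : (K <= U)%VS -> (n.-1 <= \dim K)%N ->
  (forall y, y \in K -> coord y (n.*2) = 0 /\ coord y (n.*2.+1) = 0) ->
  exists r, r \in K /\ r != 0 /\ inR r.
Proof.
move=> KU dK K2; case: Ugen => dU QU.
apply: NNPP => Hno.
set K0 := (K :&: lker lam)%VS.
have F1 x : x \in K0 -> forall l, (4 <= l <= n.+1)%N -> coord x l = 0.
  move=> /memv_capP[_]; rewrite memv_ker => /eqP lx l hl.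
  have hj : (l - 4 < n - 2)%N by lia.
  have := lamE x (Ordinal hj); rewrite lx mxE /= => E.
  by have -> : l = (l - 4 + 4)%N by lia.
have F2 x : x \in K0 -> coord x 1 = 0 /\ coord x N = 0.
  move=> xK0; have [xK _] := memv_capP xK0; have xU := subvP KU x xK.
  have [y2 y3] := K2 x xK.
  have SS : Ssum x x = 0.
    rewrite /Ssum big_nat_cond big1 // => i /andP[/andP[hi1 hi2] _].
    have [->|i2] := eqVneq i 2%N.
      by rewrite y3 mulr0.
    have [->|i3] := eqVneq i 3%N.
      have -> : (n.*2.+3 - 3 = n.*2)%N by lia.
      by rewrite y2 mulr0.
    by rewrite F1 ?mul0r //; lia.
  apply: (aniso irr).
  rewrite -[RHS](QU x xU) Qform_S SS y2 y3; ring.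
have F3 x y : x \in K0 -> y \in K -> B0 x y = \sum_(j < n - 2) rho x 0 j * lam y 0 j.
  move=> xK0 yK; have [xK _] := memv_capP xK0.
  have [x2 x3] := K2 x xK; have [y2 y3] := K2 y yK; have [x1 xN] := F2 x xK0.
  rewrite /B0 (@big_cat_nat _ _ _ n.+2) //; try lia.
  rewrite (@big_cat_nat _ _ _ n.*2 n.+2) //; try lia.
  have -> : \sum_(1 <= i < n.+2) coord x i * coord y (n.*2.+3 - i) = 0.
    rewrite big_nat_cond big1 // => i /andP[/andP[hi1 hi2] _].
    have [->|i1] := eqVneq i 1%N; first by rewrite x1 mul0r.
    have [->|i2] := eqVneq i 2%N.
      by rewrite y3 mulr0.
    have [->|i3] := eqVneq i 3%N.
      have -> : (n.*2.+3 - 3 = n.*2)%N by lia.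
      by rewrite y2 mulr0.
    by rewrite F1 ?mul0r //; lia.
  have -> : \sum_(n.*2 <= i < n.*2.+3) coord x i * coord y (n.*2.+3 - i) = 0.
    rewrite big_nat_cond big1 // => i /andP[/andP[hi1 hi2] _].
    have [->|i1] := eqVneq i (n.*2)%N; first by rewrite x2 mul0r.
    have [->|i2] := eqVneq i (n.*2.+1)%N; first by rewrite x3 mul0r.
    have -> : i = N by lia.
    by rewrite xN mul0r.
  rewrite !Monoid.simpm (big_addn 0 n.*2 n.+2).
  have -> : (n.*2 - n.+2 = n - 2)%N by lia.
  rewrite big_nat_rev big_mkord; apply: eq_bigr => j _.
  rewrite lamE rhoE; have := ltn_ord j => hj.
  by congr (_ * _); congr (coord _ _); lia.
have F4 x : x \in K0 -> rho x = 0 -> x = 0.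
  move=> xK0 rx; apply: NNPP => xn0; apply: Hno; exists x.
  have [xK _] := memv_capP xK0.
  split=> //; split; first exact/eqP.
  have [x2 x3] := K2 x xK; have [x1 xN] := F2 x xK0.
  move=> l hl l2 l3.
  have [l4|l4] := ltnP l 4.
    by have -> : l = 1%N by lia.
  have [ln|ln] := leqP l n.+1; first by apply: F1 => //; lia.
  have [l2n|l2n] := ltnP l n.*2.
    have hj : (n.*2 - 1 - l < n - 2)%N by lia.
    have := rhoE x (Ordinal hj); rewrite rx mxE /= => E.
    by have -> : l = (n.*2 - 1 - (n.*2 - 1 - l))%N by lia.
  have [->|l2'] := eqVneq l (n.*2)%N; first by [].
  have [->|l3'] := eqVneq l (n.*2.+1)%N; first by [].
  by have -> : l = N by lia.
have K0R : (K0 :&: lker rho = 0)%VS.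
  apply/eqP; rewrite -subv0; apply/subvP => x /memv_capP[xK0].
  by rewrite memv_ker memv0 => /eqP rx; apply/eqP; exact: F4.
have d1 := limg_ker_dim lam K.
have d2 := limg_dim_eq K0R.
have d3 : (\dim (rho @: K0) + \dim (lam @: K) <= n - 2)%N.
  apply: dot_dim => p q /memv_imgP[x xK0 ->] /memv_imgP[y yK ->].
  have [xK _] := memv_capP xK0.
  transitivity (B0 x y); last by apply: Uiso; apply: (subvP KU).
  rewrite F3 // mxE; apply: eq_bigr => j _; by rewrite mxE.
have dK' : (n - 1 <= \dim K)%N by rewrite subn1.
rewrite -/K0 in d1.
rewrite d2 d1 in d3; have := leq_trans dK' d3; lia.
Qed.
End Geo.

Section Count.
Variable (F : finFieldType) (n : nat).
Local Notation N := (n.*2.+2).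
Local Notation V := 'rV[F]_N.

Lemma nz23 (r : V) : r != 0 -> inR r -> coord r 2 = 0 -> coord r 3 != 0.
Proof.
move=> rn0 Rr r2; apply/eqP => r3; move/eqP: rn0; apply.
apply: coord_eq => l hl; rewrite coord0.
have [->|l2] := eqVneq l 2%N; first by [].
have [->|l3] := eqVneq l 3%N; first by [].
exact: Rr.
Qed.

Lemma count_R (k : nat) (S : 'I_k -> {vspace V}) (r : 'I_k -> V) :
  (forall i, r i \in S i) -> (forall i, r i != 0) -> (forall i, inR (r i)) ->
  (forall i j, i != j -> (S i :&: S j = 0)%VS) ->
  (k <= #|{: option F}|)%N.
Proof.
move=> rS rn0 rR Sd.
pose g i : option F :=
  if coord (r i) 2 != 0 then Some (coord (r i) 3 / coord (r i) 2) else None.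
have ginj : injective g.
  move=> i j E; apply/eqP; apply: contraT => ij.
  suff [c rj] : exists c, r j = c *: r i.
    have : r j \in (S i :&: S j)%VS.
      by rewrite memv_cap rS andbT rj memvZ.
    by rewrite Sd // memv0 (negPf (rn0 j)).
  have eqR c : coord (r j) 2 = c * coord (r i) 2 -> coord (r j) 3 = c * coord (r i) 3 ->
      exists c, r j = c *: r i.
    move=> e2 e3; exists c; apply: coord_eq => l hl; rewrite coordZ.
    have [->|l2] := eqVneq l 2%N; first by [].
    have [->|l3] := eqVneq l 3%N; first by [].
    by rewrite !rR ?mulr0.
  move: E; rewrite /g.
  have [a2|a2] := eqVneq (coord (r i) 2) 0; have [b2|b2] := eqVneq (coord (r j) 2) 0 => //= E.
    have a3 := nz23 (rn0 i) (rR i) a2.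
    apply: (eqR (coord (r j) 3 / coord (r i) 3)).
      by rewrite a2 b2 mulr0.
    by rewrite divfK.
  case: E => E.
  apply: (eqR (coord (r j) 2 / coord (r i) 2)); first by rewrite divfK.
  have -> : coord (r j) 3 = coord (r j) 3 / coord (r j) 2 * coord (r j) 2 by rewrite divfK.
  by rewrite -E; field.
have := leq_card g ginj.
by rewrite card_ord.
Qed.
End Count.

Unset Implicit Arguments.

Theorem mainTheorem10 (F : finFieldType) (n : nat) (delta mu : F)
    (char2 : 2%N \in [pchar F]) (n_ge2 : (2 <= n)%N)
    (delta_irr : irreducible_poly ('X^2 + 'X + delta%:P))
    (mu_neq0 : mu != 0)
    (k : nat) (S : 'I_k -> {vspace 'rV[F]_(n.*2.+2)})
    (S_gen : forall i, is_generator delta mu (S i))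
    (S_iso : forall i, totally_isotropic0 (S i))
    (S_disj : forall i j, i != j -> (S i :&: S j)%VS = 0%VS) :
  (k <= #|F| + 1)%N.
Proof.
have c2 : (2 : F) = 0 by exact: (pcharf0 char2).
have ex i : exists r, r \in S i /\ r != 0 /\ inR r.
  have [K [KU [dK K2]]] := stepA n_ge2 c2 mu_neq0 (S_gen i) (S_iso i).
  have [r [rK [rn0 rR]]] := stepB n_ge2 delta_irr mu_neq0 (S_gen i) (S_iso i) KU dK K2.
  by exists r; split; [exact: (subvP KU) | split].
have [r rP] := fin_all_exists ex.
have := count_R (fun i => proj1 (rP i)) (fun i => proj1 (proj2 (rP i)))
  (fun i => proj2 (proj2 (rP i))) S_disj.
by rewrite card_option addn1.
Qed.
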